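(* $J=J^\epsilon\oplus J^\nu$ for some $\mathbb{F}_p[G]$-submodule $J^\nu$ of $J$, and the index $e$ vanishes on $J^\nu\cap J_{p-1}$. Moreover, for $x\in J_{p-1}$ with decomposition $x=x^\epsilon x^\nu$ ($x^\epsilon\in J^\epsilon$, $x^\nu\in J^\nu$), one has $e(x^\epsilon)=e(x)$.
   Context: $p$ odd prime. $K_0/F_0$ is a cyclic extension of degree $p$ of fields of characteristic $\neq p$; $\xi_p$ is a primitive $p$th root of unity, $F=F_0(\xi_p)$, $K=K_0(\xi_p)$, $s=[F:F_0]$ (prime to $p$), so $\mathrm{Gal}(K/F_0)\cong\mathrm{Gal}(F/F_0)\times\mathrm{Gal}(K_0/F_0)$. Let $\epsilon\in\mathrm{Gal}(K/F_0)$ fix $K_0$ and restrict to a generator of $\mathrm{Gal}(F/F_0)$, and let $\sigma\in\mathrm{Gal}(K/F_0)$ fix $F$ and restrict to a generator of $\mathrm{Gal}(K_0/F_0)$; then $G=\mathrm{Gal}(K/F)=\langle\sigma\rangle$, $\epsilon\sigma=\sigma\epsilon$, and $K=F(\sqrt[p]{a})$ for some $a\in F^\times$ chosen with $\sigma(\sqrt[p]{a})=\xi_p\sqrt[p]{a}$. Let $t\in\mathbb{Z}$ with $\epsilon(\xi_p)=\xi_p^t$. $\rho=\sigma-1$. $J=K^\times/K^{\times p}$ written multiplicatively with exponential Galois action, $J_i=\ker(\rho^i)$, and $J^\epsilon=\{x\in J: \epsilon(x)=x^t\}$ (an $\mathbb{F}_p[G]$-submodule). For $[\gamma]\in J_{p-1}$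 the index $e([\gamma])\in\mathbb{F}_p$ is defined by $\xi_p^{e([\gamma])}=\sigma(\delta)/\delta$ where $\delta\in K$ is any $p$th root of $N_{K/F}(\gamma)$. *)

(* Defs.v *)
From HB Require Import structures.
From mathcomp Require Import all_boot all_order all_algebra.
Set Implicit Arguments. Unset Strict Implicit. Unset Printing Implicit Defensive.
Import GRing.Theory.
Local Open Scope ring_scope.

(* Elements of J = K^x / K^{x p} are represented by nonzero elements of K;
   two representatives are identified when their quotient is a p-th power. *)
Section KummerDefs.
Variable K : fieldType.
Variable p : nat.

Definition pthpow (x : K) : Prop := exists y : K, x = y ^+ p.

Definition Jeq (x y : K) : Prop := x != 0 /\ y != 0 /\ pthpow (x / y).

Variable sg : K -> K.  (* the generator sigma of G = Gal(K/F) *)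

(* rho = sigma - 1, written multiplicatively: x |-> sigma(x)/x *)
Definition rho (x : K) : K := sg x / x.

(* x represents an element of J_i = ker(rho^i) *)
Definition Jker (i : nat) (x : K) : Prop := x != 0 /\ pthpow (iter i rho x).

Definition normKF (x : K) : K := \prod_(i < p) iter i sg x.

(* e(x) = k (mod p): some p-th root delta of N_{K/F}(x) has sigma(delta)/delta = xi^k *)
Definition has_index (xi x : K) (k : nat) : Prop :=
  exists delta : K, delta ^+ p = normKF x /\ sg delta = xi ^+ k * delta.

(* P (a predicate on representatives, saturated for Jeq) is an F_p[G]-submodule of J *)
Definition is_FpG_submodule (P : K -> Prop) : Prop :=
  (forall x, P x -> x != 0) /\
  P 1 /\
  (forall x y, P x -> Jeq x y -> P y) /\
  (forall x y, P x -> P y -> P (x * y)) /\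
  (forall x, P x -> P x^-1) /\
  (forall x, P x -> P (sg x)).

End KummerDefs.

(* J^eps = { x in J : eps(x) = x^t } *)
Definition Jeps (K : fieldType) (p : nat) (eps : K -> K) (t : nat) (x : K) : Prop :=
  x != 0 /\ pthpow p (eps x / x ^+ t).

(* Main.v *)
Require Import Defs.
From HB Require Import structures.
From mathcomp Require Import all_boot all_order all_algebra all_field.
Import GRing.Theory.
Local Open Scope ring_scope.

Set Implicit Arguments. Unset Strict Implicit.

Section Gen.
Variable K : fieldType.
Variable p : nat.

Lemma pth1 : pthpow p (1 : K). Proof. by exists 1; rewrite expr1n. Qed.
Lemma pthM (a b : K) : pthpow p a -> pthpow p b -> pthpow p (a * b).
Proof. by move=> [x ->] [y ->]; exists (x * y); rewrite exprMn. Qed.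
Lemma pthV (a : K) : pthpow p a -> pthpow p a^-1.
Proof. by move=> [x ->]; exists x^-1; rewrite exprVn. Qed.
Lemma pthX (a : K) n : pthpow p a -> pthpow p (a ^+ n).
Proof. by move=> [x ->]; exists (x ^+ n); rewrite exprAC. Qed.
Lemma pthP (y : K) : pthpow p (y ^+ p). Proof. by exists y. Qed.

Lemma Jeq_refl (a : K) : a != 0 -> Jeq p a a.
Proof. by move=> a0; do 2 split => //; rewrite divff //; apply: pth1. Qed.
Lemma Jeq_sym (a b : K) : Jeq p a b -> Jeq p b a.
Proof. by move=> [a0 [b0 h]]; do 2 split => //; rewrite -invf_div; apply: pthV. Qed.
Lemma Jeq_trans (a b c : K) : Jeq p a b -> Jeq p b c -> Jeq p a c.
Proof.
move=> [a0 [b0 h1]] [_ [c0 h2]]; do 2 split => //.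
have -> : a / c = (a / b) * (b / c) by rewrite mulrA divfK.
exact: pthM.
Qed.
Lemma Jeq_mul (a b a' b' : K) : Jeq p a b -> Jeq p a' b' -> Jeq p (a * a') (b * b').
Proof.
move=> [a0 [b0 h1]] [a0' [b0' h2]]; split; first by rewrite mulf_neq0.
split; first by rewrite mulf_neq0.
by rewrite invfM mulrACA; apply: pthM.
Qed.
Lemma Jeq_V (a b : K) : Jeq p a b -> Jeq p a^-1 b^-1.
Proof.
move=> [a0 [b0 h]]; split; first by rewrite invr_eq0.
split; first by rewrite invr_eq0.
by rewrite invrK mulrC -invf_div; apply: pthV.
Qed.
Lemma Jeq_X (a b : K) n : Jeq p a b -> Jeq p (a ^+ n) (b ^+ n).
Proof.
move=> [a0 [b0 h]]; split; first by rewrite expf_neq0.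
split; first by rewrite expf_neq0.
by rewrite -expr_div_n; apply: pthX.
Qed.
Lemma Jeq_modp (a : K) m : a != 0 -> Jeq p (a ^+ m) (a ^+ (m %% p)).
Proof.
move=> a0; split; first by rewrite expf_neq0.
split; first by rewrite expf_neq0.
rewrite {1}(divn_eq m p) exprD mulfK ?expf_neq0 //.
by rewrite exprM; apply: pthP.
Qed.
Lemma Jeq_pmod (a : K) m n : a != 0 -> m = n %[mod p] -> Jeq p (a ^+ m) (a ^+ n).
Proof.
move=> a0 e; apply: Jeq_trans (Jeq_modp m a0) _; rewrite e.
exact/Jeq_sym/Jeq_modp.
Qed.
Lemma Jeq_pth (a : K) : Jeq p a 1 <-> (a != 0 /\ pthpow p a).
Proof.
split; first by move=> [a0 [_ h]]; rewrite divr1 in h.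
by move=> [a0 h]; do 2 split => //; [exact: oner_neq0 | rewrite divr1].
Qed.
Lemma Jeq_prod (I : Type) (r : seq I) (F G : I -> K) :
  (forall i, Jeq p (F i) (G i)) -> Jeq p (\prod_(i <- r) F i) (\prod_(i <- r) G i).
Proof.
move=> h; elim: r => [|i r IH]; first by rewrite !big_nil; apply/Jeq_refl/oner_neq0.
by rewrite !big_cons; apply: Jeq_mul.
Qed.

Lemma Jeq_prod_in (I : eqType) (r : seq I) (F G : I -> K) :
  (forall i, i \in r -> Jeq p (F i) (G i)) -> Jeq p (\prod_(i <- r) F i) (\prod_(i <- r) G i).
Proof.
elim: r => [|i r IH] h; first by rewrite !big_nil; apply/Jeq_refl/oner_neq0.
rewrite !big_cons; apply: Jeq_mul; first by apply: h; rewrite mem_head.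
by apply: IH => j jr; apply: h; rewrite in_cons jr orbT.
Qed.

Definition mulmap (f : K -> K) :=
  [/\ f 1 = 1, (forall a b, f (a * b) = f a * f b) & (forall a, a != 0 -> f a != 0)].

Section MM.
Variable f : K -> K.
Hypothesis hf : mulmap f.
Lemma mm1 : f 1 = 1. Proof. by case: hf. Qed.
Lemma mmM a b : f (a * b) = f a * f b. Proof. by case: hf. Qed.
Lemma mm0 a : a != 0 -> f a != 0. Proof. by case: hf => _ _; apply. Qed.
Lemma mmV a : a != 0 -> f a^-1 = (f a)^-1.
Proof.
move=> a0; have h : f a * f a^-1 = 1 by rewrite -mmM mulfV // mm1.
by rewrite -[f a^-1](mulKf (mm0 a0)) h mulr1.
Qed.
Lemma mmX a n : f (a ^+ n) = (f a) ^+ n.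
Proof. elim: n => [|n IH]; first by rewrite !expr0 mm1. by rewrite !exprS mmM IH. Qed.
Lemma mmD a b : b != 0 -> f (a / b) = f a / f b.
Proof. by move=> b0; rewrite mmM mmV. Qed.
Lemma mm_pth a : pthpow p a -> pthpow p (f a).
Proof. by move=> [y ->]; rewrite mmX; apply: pthP. Qed.
Lemma mm_Jeq a b : Jeq p a b -> Jeq p (f a) (f b).
Proof.
move=> [a0 [b0 h]]; do 2 (split; first by apply: mm0).
by rewrite -mmD //; apply: mm_pth.
Qed.
Lemma mm_prod (I : Type) (r : seq I) (F : I -> K) :
  f (\prod_(i <- r) F i) = \prod_(i <- r) f (F i).
Proof. by apply: (big_morph f mmM mm1). Qed.
End MM.

Lemma mm_comp f g : mulmap f -> mulmap g -> mulmap (f \o g).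
Proof.
move=> hf hg; split => /=; first by rewrite !mm1.
  by move=> a b; rewrite !mmM.
by move=> a a0; do 2 apply: mm0 => //.
Qed.
Lemma mm_iter f n : mulmap f -> mulmap (iter n f).
Proof.
move=> hf; elim: n => [|n IH]; first by split.
split => /=; first by rewrite !mm1.
  by move=> a b; rewrite !mmM.
by move=> a a0; do 2 apply: mm0 => //.
Qed.
Lemma mm_rmorph (f : {rmorphism K -> K}) : mulmap f.
Proof. split; [exact: rmorph1 | exact: rmorphM | by move=> a; rewrite fmorph_eq0]. Qed.
Lemma mm_prodmap (n : nat) (g : nat -> K -> K) (c : nat -> nat) :
  (forall j, mulmap (g j)) -> mulmap (fun x => \prod_(j < n) (g j x) ^+ c j).
Proof.
move=> hg; split.
- by apply: big1 => j _; rewrite mm1 ?expr1n.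
- by move=> a b; rewrite -big_split /=; apply: eq_bigr => j _; rewrite mmM // exprMn.
- move=> a a0; rewrite prodf_seq_neq0; apply/allP => j _ /=.
  by rewrite expf_neq0 // mm0.
Qed.
End Gen.

Section Arith.
Variables p t s : nat.
Hypothesis pp : prime p.
Hypothesis s0 : (0 < s)%N.
Hypothesis cop : coprime s p.
Hypothesis ts : t ^ s = 1 %[mod p].

Lemma modFp m n : (m%:R = n%:R :> 'F_p) -> m = n %[mod p].
Proof. by move=> /(congr1 (fun x : 'F_p => nat_of_ord x)); rewrite !val_Fp_nat. Qed.

Definition SF : 'F_p := s%:R.
Definition TF : 'F_p := t%:R.
Definition sinv : nat := nat_of_ord (SF^-1).
Definition cc (j : nat) : nat := (sinv * t ^ (s.-1 * j))%N.

Lemma TFs : TF ^+ s = 1.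
Proof. by rewrite /TF -natrX -Fp_nat_mod // ts Fp_nat_mod. Qed.

Lemma SF0 : SF != 0.
Proof. by rewrite /SF -unitfE unitFpE // coprime_sym. Qed.

Lemma TF0 : TF != 0.
Proof.
apply/eqP => h; have := TFs; rewrite h expr0n; case: s s0 => //= n _ /eqP; rewrite eq_sym oner_eq0.
Qed.

Lemma ccF j : (cc j)%:R = SF^-1 * TF ^+ (s.-1 * j) :> 'F_p.
Proof. by rewrite /cc natrM natrX natr_Zp. Qed.

Lemma TFs1 : TF ^+ s.-1 = TF^-1.
Proof.
apply: (mulfI TF0); rewrite mulfV ?TF0 // -exprS prednK //; exact: TFs.
Qed.

Lemma K1 j : (t ^ j * cc j)%:R = SF^-1 :> 'F_p.
Proof.
rewrite natrM natrX ccF -/TF mulrCA -exprD.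
have -> : (j + s.-1 * j = s * j)%N by rewrite -{1}(mul1n j) -mulnDl add1n prednK.
by rewrite exprM TFs expr1n mulr1.
Qed.

Lemma K2 : (\sum_(j < s) t ^ j * cc j)%:R = 1 :> 'F_p.
Proof.
rewrite natr_sum (eq_bigr (fun _ => SF^-1)) => [|j _]; last exact: K1.
by rewrite sumr_const card_ord -mulr_natl mulfV // SF0.
Qed.

Lemma K3 j : (cc j)%:R = (t * cc j.+1)%:R :> 'F_p.
Proof.
rewrite natrM !ccF -/TF mulrCA -exprS mulnS -addSn exprD prednK //.
by rewrite TFs mul1r.
Qed.

Lemma K4 : (cc s.-1)%:R = (t * cc 0)%:R :> 'F_p.
Proof.
by rewrite natrM !ccF -/TF muln0 expr0 mulr1 exprM TFs1 exprVn TFs1 invrK mulrC.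
Qed.
End Arith.



Section BinF.
Variable p : nat.
Hypothesis pp : prime p.
Hypothesis po : odd p.

Lemma binFp i : (i < p)%N -> ('C(p.-1, i))%:R = (-1) ^+ i :> 'F_p.
Proof.
elim: i => [|i IH] lt; first by rewrite bin0 expr0.
have h : ('C(p, i.+1))%:R = 0 :> 'F_p.
  by rewrite -Fp_nat_mod // (eqP (prime_dvd_bin pp _)) // lt.
have e : 'C(p, i.+1) = ('C(p.-1, i.+1) + 'C(p.-1, i))%N by rewrite -binS prednK // prime_gt0.
move: h; rewrite e natrD IH ?(ltnW lt) // => /eqP; rewrite addr_eq0 => /eqP ->.
by rewrite exprS mulN1r.
Qed.

Lemma predpF : (p.-1)%:R = -1 :> 'F_p.
Proof.
apply/eqP; rewrite -addr_eq0 -(natrD _ _ 1) addn1 prednK ?prime_gt0 //.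
by apply/eqP; apply: pchar_Fp_0.
Qed.

Lemma binF i : (i < p)%N -> ('C(p.-1, i) * p.-1 ^ (p.-1 - i))%:R = 1 :> 'F_p.
Proof.
move=> lt; rewrite natrM natrX binFp // predpF -exprD subnKC; last first.
  by rewrite -ltnS prednK // prime_gt0.
rewrite -signr_odd; have p1 : p = p.-1.+1 by rewrite prednK // prime_gt0.
by move: po; rewrite p1 /= => /negbTE ->.
Qed.
End BinF.

Lemma comm_iter (T : Type) (f g : T -> T) :
  (forall x, f (g x) = g (f x)) -> forall n x, iter n f (g x) = g (iter n f x).
Proof. by move=> h; elim=> [|n IH] x //=; rewrite IH h. Qed.

Lemma comm_iter2 (T : Type) (f g : T -> T) :
  (forall x, f (g x) = g (f x)) -> forall n m x, iter n f (iter m g x) = iter m g (iter n f x).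
Proof. by move=> h n; elim=> [|m IH] x //=; rewrite comm_iter // IH. Qed.

Section Main.
Variable K : fieldType.
Variables (p t s : nat) (sg eps : {rmorphism K -> K}) (xi : K).
Hypothesis pp : prime p.
Hypothesis s0 : (0 < s)%N.
Hypothesis cop : coprime s p.
Hypothesis comm : forall x, sg (eps x) = eps (sg x).
Hypothesis sgp : forall x, iter p sg x = x.
Hypothesis epss : forall x, iter s eps x = x.
Hypothesis prim : p.-primitive_root xi.
Hypothesis sgxi : sg xi = xi.
Hypothesis epsxi : eps xi = xi ^+ t.

Lemma iter_eps_xi j : iter j eps xi = xi ^+ (t ^ j).
Proof. by elim: j => [|j IH] /=; rewrite ?expr1 // IH rmorphXn epsxi -exprM expnS. Qed.

Lemma ts : t ^ s = 1 %[mod p].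
Proof. by apply/eqP; rewrite -(eq_prim_root_expr prim) -iter_eps_xi epss expr1. Qed.

Let c := cc p t s.
Let Kj j : (cc p t s j)%:R = (t * cc p t s j.+1)%:R :> 'F_p := K3 pp s0 ts j.

Definition P (x : K) : K := \prod_(j < s) (iter j eps x) ^+ c j.

Lemma mmP : mulmap P.
Proof. exact: (@mm_prodmap K s (fun j => iter j eps) c (fun j => mm_iter j (mm_rmorph eps))). Qed.

Lemma Jeq_Fp (a : K) m n : a != 0 -> (m%:R = n%:R :> 'F_p) -> Jeq p (a ^+ m) (a ^+ n).
Proof. by move=> a0 h; apply: Jeq_pmod => //; apply: modFp. Qed.

Lemma P_eps x : x != 0 -> Jeq p (eps (P x)) (P x ^+ t).
Proof.
move=> x0.
have ix j : iter j eps x != 0 by apply: (mm0 (mm_iter j (mm_rmorph eps))).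
rewrite /P rmorph_prod -prodrXl.
have [s1 es1] : exists s1, s = s1.+1 by exists s.-1; rewrite prednK.
have K4' := K4 pp s0 ts; rewrite es1 /= in K4'.
move: (epss); rewrite es1 => es.
rewrite big_ord_recr big_ord_recl /= rmorphXn -iterS es mulrC.
apply: Jeq_mul.
  by rewrite -exprM; apply: Jeq_Fp => //; rewrite mulnC /c es1 K4'.
apply: Jeq_prod => j /=; rewrite rmorphXn -!iterS -exprM mulnC.
by apply: Jeq_Fp => //; rewrite /c /bump /= add1n Kj.
Qed.

Lemma Jeps_Jeq y : Jeps p eps t y -> Jeq p (eps y) (y ^+ t).
Proof.
move=> [y0 h]; split; first by rewrite fmorph_eq0.
by split => //; rewrite expf_neq0.
Qed.

Lemma Jeq_Jeps y : Jeq p (eps y) (y ^+ t) -> Jeps p eps t y.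
Proof. by move=> [e0 [_ h]]; split => //; rewrite fmorph_eq0 in e0. Qed.

Lemma iterJ y : Jeq p (eps y) (y ^+ t) -> forall j, Jeq p (iter j eps y) (y ^+ (t ^ j)).
Proof.
move=> h; have y0 : y != 0 by case: h; rewrite fmorph_eq0.
elim=> [|j IH] /=; first by rewrite expr1; apply: Jeq_refl.
apply: Jeq_trans (mm_Jeq (mm_rmorph eps) IH) _.
rewrite rmorphXn expnS exprM; exact: Jeq_X.
Qed.

Lemma P_Jeps y : Jeq p (eps y) (y ^+ t) -> Jeq p (P y) y.
Proof.
move=> h; have y0 : y != 0 by case: h; rewrite fmorph_eq0.
apply: Jeq_trans (_ : Jeq p _ (\prod_(j < s) y ^+ (t ^ j * c j))) _.
  by apply: Jeq_prod => j; rewrite exprM; apply/Jeq_X/iterJ.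
rewrite prodrXr -{2}(expr1 y); apply: Jeq_Fp => //.
by rewrite /c; apply: (K2 pp s0 cop ts).
Qed.

Lemma P0 x : x != 0 -> P x != 0.
Proof. exact: (mm0 mmP). Qed.

Lemma PJeps x : x != 0 -> Jeps p eps t (P x).
Proof. by move=> x0; apply/Jeq_Jeps/P_eps. Qed.

Lemma PP x : x != 0 -> Jeq p (P (P x)) (P x).
Proof. by move=> x0; apply/P_Jeps/P_eps. Qed.

Lemma iter_eps_sg j x : iter j eps (sg x) = sg (iter j eps x).
Proof. by apply: comm_iter => y; rewrite comm. Qed.

Lemma P_sg x : P (sg x) = sg (P x).
Proof.
rewrite /P rmorph_prod; apply: eq_bigr => j _.
by rewrite rmorphXn iter_eps_sg.
Qed.

Lemma mm_rho : mulmap (rho sg).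
Proof.
split; rewrite /rho.
- by rewrite rmorph1 divr1.
- by move=> a b; rewrite rmorphM invfM mulrACA.
- by move=> a a0; rewrite mulf_neq0 ?invr_eq0 // fmorph_eq0.
Qed.

Lemma rho_eps x : rho sg (eps x) = eps (rho sg x).
Proof. by rewrite /rho rmorphM fmorphV comm. Qed.

Lemma iter_rho_P n x : iter n (rho sg) (P x) = P (iter n (rho sg) x).
Proof.
rewrite /P (mm_prod (mm_iter n mm_rho)); apply: eq_bigr => j _.
rewrite (mmX (mm_iter n mm_rho)); congr (_ ^+ _).
exact: (comm_iter2 rho_eps).
Qed.

Definition N := normKF p sg.

Lemma mmN : mulmap N.
Proof.
split; rewrite /N /normKF.
- by apply: big1 => i _; rewrite (mm1 (mm_iter i (mm_rmorph sg))).
- by move=> a b; rewrite -big_split; apply: eq_bigr => i _; rewrite (mmM (mm_iter i (mm_rmorph sg))).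
- move=> a a0; rewrite prodf_seq_neq0; apply/allP => i _ /=.
  exact: (mm0 (mm_iter i (mm_rmorph sg))).
Qed.

Lemma sg_N v : sg (N v) = N v.
Proof.
have [p1 ep] : exists p1, p = p1.+1 by exists p.-1; rewrite prednK // prime_gt0.
rewrite /N /normKF rmorph_prod.
move: (sgp); rewrite ep => sp.
rewrite big_ord_recr big_ord_recl /= -iterS sp mulrC; congr (_ * _).
Qed.

Lemma N_sg v : N (sg v) = N v.
Proof.
transitivity (sg (N v)); last exact: sg_N.
rewrite /N /normKF rmorph_prod; apply: eq_bigr => i _.
by rewrite -iterSr iterS.
Qed.

Lemma iter_sg_P i x : iter i sg (P x) = P (iter i sg x).
Proof. by rewrite (comm_iter (fun y => esym (P_sg y))). Qed.

Lemma N_P x : N (P x) = P (N x).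
Proof.
rewrite /N /normKF (mm_prod mmP); apply: eq_bigr => i _.
by rewrite iter_sg_P.
Qed.


Definition rho' (y : K) : K := sg y * y ^+ p.-1.

Lemma mm_rho' : mulmap rho'.
Proof.
split; rewrite /rho'.
- by rewrite rmorph1 expr1n mulr1.
- by move=> a b; rewrite rmorphM exprMn mulrACA.
- by move=> a a0; rewrite mulf_neq0 ?expf_neq0 // fmorph_eq0.
Qed.

Lemma rho_rho' y : y != 0 -> Jeq p (rho sg y) (rho' y).
Proof.
move=> y0; have sy0 : sg y != 0 by rewrite fmorph_eq0.
split; first by rewrite /rho mulf_neq0 ?invr_eq0.
split; first by rewrite /rho' mulf_neq0 ?expf_neq0.
exists y^-1; rewrite /rho /rho'.
have -> : p = p.-1.+1 by rewrite prednK // prime_gt0.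
rewrite /= exprS invfM exprVn -mulrA.
by rewrite mulrCA mulVKf.
Qed.

Lemma iter_rho_rho' n x : x != 0 -> Jeq p (iter n (rho sg) x) (iter n rho' x).
Proof.
move=> x0; elim: n => [|n IH] /=; first exact: Jeq_refl.
apply: Jeq_trans (mm_Jeq mm_rho IH) _.
by apply: rho_rho'; apply: (mm0 (mm_iter n mm_rho')).
Qed.

Lemma iter_rho'_eq n x : iter n rho' x =
  \prod_(0 <= i < n.+1) (iter i sg x) ^+ ('C(n, i) * p.-1 ^ (n - i)).
Proof.
elim: n => [|n IH]; first by rewrite big_nat1 /= bin0 subnn expn0 muln1 expr1.
rewrite iterS IH /rho'.
rewrite (big_nat_recl (n.+1)) //.
set q := p.-1.
have E : \prod_(0 <= i < n.+1) (iter i.+1 sg x) ^+ ('C(n.+1, i.+1) * q ^ (n.+1 - i.+1)) =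
  (\prod_(0 <= i < n.+1) (iter i.+1 sg x) ^+ ('C(n, i.+1) * q ^ (n - i))) *
  (\prod_(0 <= i < n.+1) (iter i.+1 sg x) ^+ ('C(n, i) * q ^ (n - i))).
  by rewrite -big_split; apply: eq_bigr => i _; rewrite binS subSS mulnDl exprD.
rewrite E /= [RHS]mulrA [RHS]mulrC; congr (_ * _).
  by rewrite rmorph_prod; apply: eq_bigr => i _; rewrite rmorphXn.
rewrite -prodrXl (big_nat_recl n) // (big_nat_recr n) //= (bin_small (ltnSn n)) expr0 mulr1 -!exprM.
congr (_ * _); first by rewrite bin0 !mul1n subn0 expnSr.
apply: eq_big_nat => i /andP[_ lt]; rewrite -exprM -mulnA -expnSr subnSK //.
Qed.


Lemma norm_rho (po : odd p) x : x != 0 -> Jeq p (N x) (iter p.-1 (rho sg) x).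
Proof.
move=> x0; apply: Jeq_trans (Jeq_sym (iter_rho_rho' _ x0)).
rewrite iter_rho'_eq prednK ?prime_gt0 // /N /normKF.
rewrite -(big_mkord xpredT (fun i => iter i sg x)).
apply: Jeq_prod_in => i; rewrite mem_index_iota => /andP[_ lt].
rewrite -{1}(expr1 (iter i sg x)); apply: Jeq_Fp.
  exact: (mm0 (mm_iter i (mm_rmorph sg))).
by rewrite binF.
Qed.


Lemma P_xi : P xi = xi.
Proof.
rewrite /P (eq_bigr (fun j : 'I_s => xi ^+ (t ^ j * c j))); last first.
  by move=> j _; rewrite iter_eps_xi exprM.
have e : (\sum_(j < s) t ^ j * c j)%:R = 1%:R :> 'F_p by rewrite (K2 pp s0 cop ts).
rewrite prodrXr -(prim_expr_mod prim) (modFp pp e).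
by rewrite prim_expr_mod // expr1.
Qed.

Lemma Jeq_pth_trans (a b : K) : Jeq p a b -> pthpow p b -> pthpow p a.
Proof.
move=> h hb; have b0 : b != 0 by case: h => _ [].
have := Jeq_trans h (proj2 (Jeq_pth p b) (conj b0 hb)).
by case/Jeq_pth.
Qed.

Lemma N_pth (po : odd p) z : Jker p sg p.-1 z -> exists d, d ^+ p = N z.
Proof.
move=> [z0 h]; have [d hd] := Jeq_pth_trans (norm_rho po z0) h.
by exists d.
Qed.

Lemma index0 (po : odd p) z : z != 0 -> pthpow p (P z) -> Jker p sg p.-1 z ->
  has_index p sg xi z 0.
Proof.
move=> z0 [v hv] hk.
have [d0 hd] := N_pth po hk.
have Nz0 : N z != 0 by apply: (mm0 mmN).
have d00 : d0 != 0 by apply: contraNneq Nz0 => e; rewrite -hd e expf_eq0 prime_gt0 ?eqxx.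
have pg0 : (0 < p)%N by rewrite prime_gt0.
set zeta := sg d0 / d0.
have zp : zeta ^+ p = 1 by rewrite /zeta expr_div_n -rmorphXn hd sg_N divff.
have [k hk'] := prim_rootP prim zp.
have sgd : sg d0 = xi ^+ k * d0 by rewrite -hk' /zeta divfK.
have v0 : v != 0.
  by apply: contraNneq (P0 z0) => e; rewrite hv e expf_eq0 prime_gt0 ?eqxx.
have Nv0 : N v != 0 by apply: (mm0 mmN).
set d1 := P d0.
have d10 : d1 != 0 by apply: P0.
have d1p : (d1 / N v) ^+ p = 1.
  by rewrite expr_div_n /d1 -(mmX mmP) hd -N_P hv (mmX mmN) divff // expf_neq0.
have [m hm] := prim_rootP prim d1p.
have sd1 : sg d1 = d1.
  have : sg (d1 / N v) = d1 / N v by rewrite hm rmorphXn sgxi.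
  by rewrite rmorphM fmorphV sg_N => /(mulIf (invr_neq0 Nv0)).
have : sg d1 = xi ^+ k * d1 by rewrite /d1 -P_sg sgd (mmM mmP) (mmX mmP) P_xi.
rewrite sd1 => /esym; rewrite -{2}(mul1r d1) => /(mulIf d10) xk.
by exists d0; split => //; rewrite sgd xk expr0.
Qed.


Lemma Jker_Jeq a b : Jeq p a b -> Jker p sg p.-1 a -> Jker p sg p.-1 b.
Proof.
move=> h [a0 ha]; split; first by case: h => _ [].
apply: Jeq_pth_trans ha; apply: Jeq_sym.
exact: (mm_Jeq (mm_iter _ mm_rho) h).
Qed.

Lemma Jker_mul a b : Jker p sg p.-1 a -> Jker p sg p.-1 b -> Jker p sg p.-1 (a * b).
Proof.
move=> [a0 ha] [b0 hb]; split; first by rewrite mulf_neq0.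
by rewrite (mmM (mm_iter _ mm_rho)); apply: pthM.
Qed.

Lemma Jker_inv a : Jker p sg p.-1 a -> Jker p sg p.-1 a^-1.
Proof.
move=> [a0 ha]; split; first by rewrite invr_eq0.
by rewrite (mmV (mm_iter _ mm_rho)) //; apply: pthV.
Qed.

Lemma Jker_P a : Jker p sg p.-1 a -> Jker p sg p.-1 (P a).
Proof.
move=> [a0 ha]; split; first exact: P0.
by rewrite iter_rho_P; apply: (mm_pth mmP).
Qed.

Lemma main_result (po : odd p) :
  exists Jnu : K -> Prop,
    is_FpG_submodule p sg Jnu /\
    (forall x, x != 0 -> exists y z, Jeps p eps t y /\ Jnu z /\ Jeq p x (y * z)) /\
    (forall y, Jeps p eps t y -> Jnu y -> pthpow p y) /\
    (forall x, Jnu x -> Jker p sg p.-1 x -> has_index p sg xi x 0) /\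
    (forall x y z, Jker p sg p.-1 x -> Jeps p eps t y -> Jnu z -> Jeq p x (y * z) ->
       Jker p sg p.-1 y /\
       (forall k, has_index p sg xi y k <-> has_index p sg xi x k)).
Proof.
exists (fun z => z != 0 /\ pthpow p (P z)).
split.
  split; first by move=> x [].
  split; first by split; [exact: oner_neq0 | rewrite (mm1 mmP); exact: pth1].
  split.
    move=> x y [x0 hx] h; split; first by case: h => _ [].
    by apply: Jeq_pth_trans hx; apply/Jeq_sym/(mm_Jeq mmP).
  split.
    by move=> x y [x0 hx] [y0 hy]; rewrite mulf_neq0 // (mmM mmP); split => //; apply: pthM.
  split.
    by move=> x [x0 hx]; rewrite invr_eq0 (mmV mmP) //; split => //; apply: pthV.
  by move=> x [x0 hx]; rewrite fmorph_eq0 P_sg; split => //; apply: (mm_pth (mm_rmorph sg)).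
split.
  move=> x x0; exists (P x), (x / P x); split; first exact: PJeps.
  split; last by rewrite mulrC divfK ?P0 //; apply: Jeq_refl.
  split; first by rewrite mulf_neq0 ?invr_eq0 ?P0.
  rewrite (mmD mmP) ?P0 //.
  have := Jeq_mul (Jeq_refl p (P0 x0)) (Jeq_V (PP x0)).
  by rewrite mulfV ?P0 // => /Jeq_pth [].
split.
  move=> y hy [y0 hPy].
  have h1 := Jeq_sym (P_Jeps (Jeps_Jeq hy)).
  by apply: Jeq_pth_trans h1 hPy.
split; first by move=> x [x0 hx] hk; apply: index0.
move=> x y z hx hy [z0 hz] e.
have Py := P_Jeps (Jeps_Jeq hy).
have Pz : Jeq p (P z) 1 by apply/Jeq_pth; split => //; apply: P0.
have yPx : Jeq p y (P x).
  apply: Jeq_trans (Jeq_sym Py) _.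
  apply: Jeq_trans (_ : Jeq p _ (P y * P z)) _.
    have Py0 : P y != 0 by apply: P0; case: hy.
    by have := Jeq_mul (Jeq_refl p Py0) (Jeq_sym Pz); rewrite mulr1.
  by rewrite -(mmM mmP); apply/Jeq_sym/(mm_Jeq mmP).
have hky : Jker p sg p.-1 y by apply: Jker_Jeq (Jeq_sym yPx) (Jker_P hx).
have y0 : y != 0 by case: hy.
have hkz : Jker p sg p.-1 z.
  apply: Jker_Jeq (Jker_mul hx (Jker_inv hky)).
  have := Jeq_mul e (Jeq_refl p (invr_neq0 y0)).
  by rewrite [y * z / y]mulrAC mulfV // mul1r.
have [dz [hdz sdz]] := index0 po z0 hz hkz.
rewrite expr0 mul1r in sdz.
split => // k.
case: e => x0 [yz0 [w hw]].
have w0 : w != 0 by apply: contraNneq (mulf_neq0 x0 (invr_neq0 yz0)) => ew; rewrite hw ew expf_eq0 prime_gt0 ?eqxx.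
have ex : x = y * z * w ^+ p by rewrite -hw mulrC divfK.
have Nw0 : N w != 0 by apply: (mm0 mmN).
have dz0 : dz != 0.
  by apply: contraNneq (mm0 mmN z0) => ed; rewrite /N -hdz ed expf_eq0 prime_gt0 ?eqxx.
split.
  move=> [dy [hdy sdy]]; exists (dy * dz * N w); split.
    by rewrite !exprMn hdy hdz -(mmX mmN) -!(mmM mmN) -ex.
  by rewrite !rmorphM sdy sdz sg_N !mulrA.
move=> [dx [hdx sdx]]; exists (dx / dz / N w); split.
  rewrite !expr_div_n hdx hdz -(mmX mmN) -!(mmD mmN) ?expf_neq0 //.
  by rewrite ex [y * z * w ^+ p / z]mulrAC mulfK ?expf_neq0 // mulfK.
by rewrite !rmorphM !fmorphV sdx sdz sg_N !mulrA.
Qed.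

End Main.

Theorem lemma7 (p : nat) (K : fieldType) (s t : nat)
    (sg eps : {rmorphism K -> K}) (xi alpha : K) :
  prime p -> odd p -> (p%:R : K) != 0 ->
  (* sigma, eps are commuting automorphisms of K *)
  bijective sg -> bijective eps -> (forall x, sg (eps x) = eps (sg x)) ->
  (* sigma generates G = Gal(K/F), cyclic of order p, F = Fix(sigma) *)
  (forall x, iter p sg x = x) -> (exists x, sg x != x) ->
  (* eps has order s, prime to p, and restricts to a generator of Gal(F/F0),
     F0 = Fix<sigma, eps>, K0 = Fix(eps) *)
  (0 < s)%N -> coprime s p -> (forall x, iter s eps x = x) ->
  (forall k, (0 < k < s)%N -> exists y, sg y = y /\ iter k eps y != y) ->
  (* xi primitive p-th root of unity in F, eps(xi) = xi^t *)
  p.-primitive_root xi -> sg xi = xi -> eps xi = xi ^+ t ->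
  (* F = F0(xi) *)
  (forall y, sg y = y -> exists c : 'I_p -> K,
       (forall i, sg (c i) = c i /\ eps (c i) = c i) /\
       y = \sum_(i < p) c i * xi ^+ i) ->
  (* K = F(alpha), alpha = a^(1/p), a in F, sigma(alpha) = xi alpha *)
  alpha != 0 -> sg (alpha ^+ p) = alpha ^+ p -> sg alpha = xi * alpha ->
  (forall y, exists c : 'I_p -> K,
       (forall i, sg (c i) = c i) /\ y = \sum_(i < p) c i * alpha ^+ i) ->
  exists Jnu : K -> Prop,
    is_FpG_submodule p sg Jnu /\
    (* J = J^eps (+) J^nu *)
    (forall x, x != 0 -> exists y z, Jeps p eps t y /\ Jnu z /\ Jeq p x (y * z)) /\
    (forall y, Jeps p eps t y -> Jnu y -> pthpow p y) /\
    (* e vanishes on J^nu /\ J_{p-1} *)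
    (forall x, Jnu x -> Jker p sg p.-1 x -> has_index p sg xi x 0) /\
    (* e(x^eps) = e(x) *)
    (forall x y z, Jker p sg p.-1 x -> Jeps p eps t y -> Jnu z -> Jeq p x (y * z) ->
       Jker p sg p.-1 y /\
       (forall k, has_index p sg xi y k <-> has_index p sg xi x k)).
Proof.
move=> pp po _ _ _ comm sgp _ s0 cop epss _ prim sgxi epsxi _ _ _ _ _.
exact: (main_result pp s0 cop comm sgp epss prim sgxi epsxi po).
Qed.
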